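(* For every $0<\sigma<1$ and every integer $n\ge1$, $$\sum_{j=0}^n\sigma^{\sqrt{j}+\sqrt{n-j}-\sqrt{n}}\le\frac{20}{(1-\sigma)^2}.$$ *)

(* Defs.v *)
From Stdlib Require Import Reals.

(* Main.v *)
Require Import Defs.
From Stdlib Require Import Reals.
From Stdlib Require Import Lra Lia Psatz.
Open Scope R_scope.

Fixpoint A (t : R) (m : nat) : R :=
  match m with O => 0 | S m' => A t m' + (2 * INR m' + 1) * t ^ m' end.

Lemma sum_sqrt_exact (t : R) (N : nat) :
  sum_f_R0 (fun k => t ^ Nat.sqrt k) N =
  A t (Nat.sqrt N) + (INR (N - Nat.sqrt N * Nat.sqrt N) + 1) * t ^ Nat.sqrt N.
Proof.
  induction N as [|N IH].
  - simpl. lra.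
  - rewrite tech5, IH.
    pose proof (Nat.sqrt_spec N (Nat.le_0_l _)) as HN.
    pose proof (Nat.sqrt_spec (S N) (Nat.le_0_l _)) as HSN.
    destruct (Nat.sqrt_succ_or N) as [E|E]; rewrite E in *.
    + assert (HE : (N - Nat.sqrt N * Nat.sqrt N = 2 * Nat.sqrt N)%nat) by nia.
      assert (HE2 : (S N - S (Nat.sqrt N) * S (Nat.sqrt N) = 0)%nat) by nia.
      rewrite HE, HE2. simpl A. rewrite mult_INR. simpl INR. ring.
    + assert (HE : (S N - Nat.sqrt N * Nat.sqrt N = S (N - Nat.sqrt N * Nat.sqrt N))%nat) by nia.
      rewrite HE, S_INR. ring.
Qed.

Lemma A_closed (t : R) (m : nat) : t <> 1 ->
  A t m + t ^ m * ((2 * INR m + 1) / (1 - t) + 2 * t / (1 - t) ^ 2) = (1 + t) / (1 - t) ^ 2.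
Proof.
  intro Ht. assert (H1 : 1 - t <> 0) by lra.
  induction m as [|m IH].
  - simpl. field. auto.
  - rewrite <- IH. simpl A. rewrite S_INR. simpl pow. field. auto.
Qed.

Lemma A_nonneg t m : 0 <= t -> 0 <= A t m.
Proof.
  intro Ht. induction m; simpl. lra.
  pose proof (pos_INR m). pose proof (pow_le t m Ht). nra.
Qed.

Lemma sum_bound (t : R) (N : nat) : 0 <= t < 1 ->
  sum_f_R0 (fun k => t ^ Nat.sqrt k) N <= (1 + t) / (1 - t) ^ 2.
Proof.
  intros [H0 H1]. rewrite sum_sqrt_exact.
  set (m := Nat.sqrt N).
  pose proof (Nat.sqrt_spec N (Nat.le_0_l _)) as HN. fold m in HN.
  rewrite <- (A_closed t m) by lra.
  assert (Hr : INR (N - m * m) <= 2 * INR m).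
  { replace (2 * INR m) with (INR (2 * m)) by (rewrite mult_INR; simpl; ring).
    apply le_INR. nia. }
  pose proof (pow_le t m H0).
  assert (Hd : 0 < 1 - t) by lra.
  assert (0 <= 2 * t / (1 - t) ^ 2) by (apply Rmult_le_pos; [lra| left; apply Rinv_0_lt_compat; nra]).
  assert ((2 * INR m + 1) <= (2 * INR m + 1) / (1 - t)).
  { pose proof (pos_INR m). unfold Rdiv. rewrite <- (Rmult_1_r (2 * INR m + 1)) at 1.
    apply Rmult_le_compat_l. lra. rewrite <- Rinv_1. apply Rinv_le_contravar; lra. }
  nra.
Qed.

Lemma sum_rev (f : nat -> R) (N : nat) :
  sum_f_R0 (fun j => f (N - j)%nat) N = sum_f_R0 f N.
Proof.
  induction N as [|N IH].
  - simpl. reflexivity.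
  - rewrite decomp_sum by lia. simpl Init.Nat.pred.
    rewrite tech5. rewrite <- IH.
    replace (S N - 0)%nat with (S N) by lia.
    rewrite (sum_eq (fun i => f (S N - S i)%nat) (fun j => f (N - j)%nat)) by (intros; f_equal; lia).
    ring.
Qed.

Lemma sqrt_ineq (a b : R) : 0 <= a <= b ->
  sqrt a / 2 <= sqrt a + sqrt b - sqrt (a + b).
Proof.
  intros [Ha Hab].
  pose proof (sqrt_pos a). pose proof (sqrt_pos b). pose proof (sqrt_pos (a+b)).
  pose proof (sqrt_sqrt a Ha). pose proof (sqrt_sqrt b ltac:(lra)).
  pose proof (sqrt_sqrt (a+b) ltac:(lra)).
  assert (sqrt a <= sqrt b) by (apply sqrt_le_1_alt; lra).
  nra.
Qed.

Lemma nat_sqrt_le (q : nat) : INR (Nat.sqrt q) <= sqrt (INR q).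
Proof.
  pose proof (Nat.sqrt_spec q (Nat.le_0_l _)) as [Hq _].
  rewrite <- (sqrt_pow2 (INR (Nat.sqrt q))) by apply pos_INR.
  apply sqrt_le_1_alt. simpl. rewrite Rmult_1_r, <- mult_INR. apply le_INR. exact Hq.
Qed.

Lemma rpow_mono (s x y : R) : 0 < s < 1 -> x <= y -> Rpower s y <= Rpower s x.
Proof.
  intros Hs Hxy. unfold Rpower.
  assert (ln s < 0) by (rewrite <- ln_1; apply ln_increasing; lra).
  destruct (Req_dec x y) as [->|Hne]. lra.
  left. apply exp_increasing. nra.
Qed.

Theorem lemma5p8 (sigma : R) (n : nat) :
  0 < sigma -> sigma < 1 -> (1 <= n)%nat ->
  sum_f_R0 (fun j => Rpower sigma (sqrt (INR j) + sqrt (INR (n - j)) - sqrt (INR n))) n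
  <= 20 / (1 - sigma) ^ 2.
Proof.
  intros Hs0 Hs1 Hn.
  set (t := Rpower sigma (/2)).
  assert (Ht0 : 0 < t) by (unfold t, Rpower; apply exp_pos).
  assert (Ht2 : t ^ 2 = sigma).
  { unfold t. rewrite <- Rpower_pow by exact Ht0. rewrite Rpower_mult.
    simpl INR. replace (/2 * (1+1)) with 1 by field. apply Rpower_1. exact Hs0. }
  assert (Ht1 : t < 1) by nra.
  assert (Hpow : forall q : nat, Rpower sigma (INR q / 2) = t ^ q).
  { intro q. unfold t. rewrite <- Rpower_pow by exact Ht0. rewrite Rpower_mult. f_equal. field. }
  assert (Hterm : forall j, (j <= n)%nat ->
    Rpower sigma (sqrt (INR j) + sqrt (INR (n - j)) - sqrt (INR n))
    <= t ^ Nat.sqrt j + t ^ Nat.sqrt (n - j)).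
  { intros j Hj.
    pose proof (pow_le t (Nat.sqrt j) ltac:(lra)).
    pose proof (pow_le t (Nat.sqrt (n - j)) ltac:(lra)).
    assert (Hn' : INR n = INR j + INR (n - j)) by (rewrite <- plus_INR; f_equal; lia).
    rewrite Hn'.
    destruct (Nat.le_ge_cases j (n - j)) as [Hle|Hge].
    - assert (INR (Nat.sqrt j) / 2 <= sqrt (INR j) + sqrt (INR (n - j)) - sqrt (INR j + INR (n - j))).
      { pose proof (nat_sqrt_le j). pose proof (sqrt_ineq (INR j) (INR (n - j))
          ltac:(split; [apply pos_INR| apply le_INR; exact Hle])). lra. }
      pose proof (rpow_mono sigma _ _ ltac:(lra) H1). rewrite Hpow in H2. lra.
    - assert (INR (Nat.sqrt (n - j)) / 2 <= sqrt (INR j) + sqrt (INR (n - j)) - sqrt (INR j + INR (n - j))).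
      { pose proof (nat_sqrt_le (n - j)) as Ha. pose proof (sqrt_ineq (INR (n - j)) (INR j)
          ltac:(split; [apply pos_INR| apply le_INR; exact Hge])) as Hb.
        rewrite (Rplus_comm (INR (n - j)) (INR j)) in Hb. lra. }
      pose proof (rpow_mono sigma _ _ ltac:(lra) H1). rewrite Hpow in H2. lra. }
  eapply Rle_trans. { apply sum_Rle. exact Hterm. }
  rewrite plus_sum.
  rewrite (sum_rev (fun k => t ^ Nat.sqrt k)).
  pose proof (sum_bound t n ltac:(lra)) as HB.
  assert (HBe : (1 + t) / (1 - t) ^ 2 = (1 + t) ^ 3 / (1 - sigma) ^ 2).
  { rewrite <- Ht2. field. split; nra. }
  assert (Hd : 0 < (1 - sigma) ^ 2) by nra.
  assert ((1 + t) ^ 3 <= 8) by nra.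
  assert (2 * ((1 + t) ^ 3 / (1 - sigma) ^ 2) <= 20 / (1 - sigma) ^ 2).
  { unfold Rdiv. rewrite <- Rmult_assoc. apply Rmult_le_compat_r.
    left; apply Rinv_0_lt_compat; exact Hd. lra. }
  lra.
Qed.
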